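(* Let $S$ be a semigroup such that for every element $s\in S$ the number of decompositions of $s$ as a product $s=s_1\cdots s_k$ ($k\ge1$) of non-identity elements of $S$ is finite. Then the category $\mathbf{OI}_{++ep}/N(S)$ is Gröbner.
   Context: Gröbner categories. Let $\mathcal{C}$ be a small category and $c$ an object. An admissible order on the morphisms out of $c$ is a choice, for every object $c'$, of a well-order $\preceq_{c'}$ on $\mathrm{Hom}(c,c')$ such that $f\prec_{c'} f'$ implies $g\circ f\prec_{c''} g\circ f'$ for all $g:c'\to c''$. On morphisms out of $c$ put the preorder $f\le g$ iff $g=h\circ f$ for some $h$; $|c/\mathcal{C}|$ is the associated poset. A poset is Noetherian if every sequence $x_1,x_2,\dots$ has $i<j$ with $x_i\le x_j$. $\mathcal{C}$ is Gröbner if for every object $c$: (G1) morphisms out of $c$ admit an admissible order, and (G2) $|c/\mathcal{C}|$ is Noetherian. $\mathbf{OI}_{++ep}$ is the category of finite ordinals $[n]=\{0<1<\dots<n\}$ with $n\ge1$ and order-preserving injections preserving both endpoints ($\varphi(0)=0$, $\varphi(n)=m$). $N(S)$ assigns $S^n$ to $[n]$, and for such $\varphi:[n]\to[m]$, $N(S)(\varphi)(t_1,\dots,t_m)=(s_1,\dots,s_n)$ with $s_i=t_{\varphi(i-1)+1}\cdots t_{\varphi(i)}$. $\mathbf{OI}_{++ep}/N(S)$ is its category of elements: objects are non-empty finite sequences $(s_1,\dots,s_n)$ in $S$; a morphism $(s_1,\dots,s_n)\to(t_1,\dots,t_m)$ is an endpoint-preserving injection $\varphi:[n]\to[m]$ with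 $N(S)(\varphi)(t_1,\dots,t_m)=(s_1,\dots,s_n)$, i.e.\ a replacement of each $s_i$ by a consecutive block of $t$'s whose product is $s_i$. *)

(* Defs.v *)
From mathcomp Require Import all_boot.
Set Implicit Arguments.
Unset Strict Implicit.
Unset Printing Implicit Defensive.

Definition sprod_eq (S : Type) (mul : S -> S -> S) (l : seq S) (x : S) : Prop :=
  match l with
  | [::] => False
  | y :: ys => foldl mul y ys = x
  end.

Definition is_identity (S : Type) (mul : S -> S -> S) (e : S) : Prop :=
  forall y, mul e y = y /\ mul y e = y.

Definition finite_decompositions (S : Type) (mul : S -> S -> S) : Prop :=
  forall s : S, exists L : seq (seq S), forall d : seq S,
    sprod_eq mul d s ->
    (forall i x, onth d i = Some x -> ~ is_identity mul x) ->
    exists j, onth L j = Some d.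

Definition phin (n m : nat) (phi : {ffun 'I_n.+1 -> 'I_m.+1}) (k : nat) : nat :=
  phi (inord k).

(* Morphisms (s_1..s_n) -> (t_1..t_m) of OI_{++ep}/N(S): order-preserving
   injections phi : [n] -> [m] with phi 0 = 0, phi n = m and
   s_i = t_{phi(i-1)+1} ... t_{phi(i)}  (0-indexed below: entry i of s is the
   product of the entries of t at positions phi(i), ..., phi(i+1)-1). *)
Definition is_mor (S : Type) (mul : S -> S -> S) (s t : seq S)
    (phi : {ffun 'I_(size s).+1 -> 'I_(size t).+1}) : Prop :=
  [/\ (forall i j : 'I_(size s).+1, i < j -> phi i < phi j),
      phin phi 0 = 0,
      phin phi (size s) = size t &
      forall (i : nat) (x : S), onth s i = Some x ->
        sprod_eq mul (drop (phin phi i) (take (phin phi i.+1) t)) x].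

Arguments is_mor {S} mul s t phi.

Definition Hom (S : Type) (mul : S -> S -> S) (s t : seq S) :=
  {phi : {ffun 'I_(size s).+1 -> 'I_(size t).+1} | is_mor mul s t phi}.

Arguments Hom {S} mul s t.

Definition comp_is (S : Type) (mul : S -> S -> S) (s t u : seq S)
    (g : Hom mul t u) (f : Hom mul s t) (h : Hom mul s u) : Prop :=
  proj1_sig h = [ffun i => proj1_sig g (proj1_sig f i)].

Definition well_order (T : Type) (R : T -> T -> Prop) : Prop :=
  [/\ (forall x, R x x),
      (forall x y, R x y -> R y x -> x = y),
      (forall x y z, R x y -> R y z -> R x z),
      (forall x y, R x y \/ R y x) &
      (forall P : T -> Prop, (exists x, P x) ->
         exists x, P x /\ forall y, P y -> R x y)].

Definition admissible_order (S : Type) (mul : S -> S -> S) (c : seq S)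
    (R : forall c' : seq S, Hom mul c c' -> Hom mul c c' -> Prop) : Prop :=
  (forall c', 0 < size c' -> well_order (R c')) /\
  (forall (c' c'' : seq S) (g : Hom mul c' c'') (f f' : Hom mul c c')
          (h h' : Hom mul c c''),
     0 < size c' -> 0 < size c'' ->
     comp_is g f h -> comp_is g f' h' ->
     (R c' f f' /\ f <> f') -> (R c'' h h' /\ h <> h')).

Arguments admissible_order {S} mul c R.

(* |c/C| is Noetherian: every sequence of morphisms f_k : c -> t_k has i < j
   with f_i <= f_j, i.e. f_j = h \o f_i for some morphism h. *)
Definition noetherian_under (S : Type) (mul : S -> S -> S) (c : seq S) : Prop :=
  forall (t : nat -> seq S) (f : forall k, Hom mul c (t k)),
    (forall k, 0 < size (t k)) ->
    exists i j, i < j /\ exists h : Hom mul (t i) (t j), comp_is h (f i) (f j).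

(* OI_{++ep}/N(S) is Groebner: objects are non-empty finite sequences in S *)
Definition groebner_OIep_NS (S : Type) (mul : S -> S -> S) : Prop :=
  forall c : seq S, 0 < size c ->
    (exists R, admissible_order mul c R) /\ noetherian_under mul c.

(* Main.v *)
Require Import Defs.
From mathcomp Require Import all_boot.
From mathcomp Require Import zify.
From Stdlib Require Import Classical ClassicalEpsilon ProofIrrelevance.
Set Implicit Arguments.
Unset Strict Implicit.
Unset Printing Implicit Defensive.

Definition chainable {T : Type} (R : T -> T -> Prop) :=
  forall f : nat -> T, exists g : nat -> nat,
    (forall k, g k < g k.+1) /\ forall k, R (f (g k)) (f (g k.+1)).

Lemma chain_all {T : Type} (R : T -> T -> Prop)
  (Rt : forall x y z, R x y -> R y z -> R x z) (g : nat -> nat) (f : nat -> T) :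
  (forall k, R (f (g k)) (f (g k.+1))) ->
  forall p q, p < q -> R (f (g p)) (f (g q)).
Proof.
move=> H p; elim=> [//|q IH]; rewrite ltnS leq_eqVlt => /orP[/eqP->//|/IH].
by move=> h; apply: Rt h (H q).
Qed.

Lemma exmin (f : nat -> nat) p :
  exists q, p < q /\ forall q', p < q' -> f q <= f q'.
Proof.
suff H : forall v q, f q = v -> p < q -> exists q0, p < q0 /\ forall q', p < q' -> f q0 <= f q'.
  by apply: (H (f p.+1) p.+1).
elim/ltn_ind=> v IH q fq pq.
destruct (classic (exists q', p < q' /\ f q' < f q)) as [[q' [pq' lt]]|N].
  by apply: (IH (f q') _ q') => //; rewrite -fq.
exists q; split=> // q' pq'; rewrite leqNgt; apply/negP=> h; apply: N; by exists q'.
Qed.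

Lemma nat_chain : chainable (fun x y : nat => x <= y).
Proof.
move=> f.
pose next p := proj1_sig (constructive_indefinite_description _ (exmin f p)).
have nP p : p < next p /\ forall q', p < q' -> f (next p) <= f q'.
  exact: (proj2_sig (constructive_indefinite_description _ (exmin f p))).
exists (fun k => iter k.+1 next 0); split=> k.
  by rewrite [iter k.+2 _ _]iterS; case: (nP (iter k.+1 next 0)).
rewrite [iter k.+1 _ _]iterS [iter k.+2 _ _]iterS.
case: (nP (iter k next 0)) => h1 h2; apply: h2.
case: (nP (next (iter k next 0))) => h3 _; exact: ltn_trans h1 h3.
Qed.

Lemma chain_vec {T : Type} (R : nat -> T -> T -> Prop)
  (Rc : forall a, chainable (R a))
  (Rt : forall a x y z, R a x y -> R a y z -> R a x z) n :
  chainable (fun u v : nat -> T => forall a, a < n -> R a (u a) (v a)).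
Proof.
elim: n => [|n IH] f.
  by exists id; split.
case: (IH f) => g [gi gc].
case: (Rc n (fun k => f (g k) n)) => h [hi hc].
exists (fun k => g (h k)); split.
  move=> k; apply: (@chain_all nat (fun x y => x < y) _ id g) => //.
  - move=> x y z; exact: ltn_trans.
move=> k a; rewrite ltnS leq_eqVlt => /orP[/eqP->|an]; first exact: hc.
exact: (@chain_all (nat -> T) (fun x y => R a (x a) (y a))
   (fun x y z => Rt a (x a) (y a) (z a)) g f (fun kk => gc kk a an) (h k) (h k.+1) (hi k)).
Qed.


Fixpoint F2 {A B : Type} (R : A -> B -> Prop) (xs : seq A) (ys : seq B) : Prop :=
  match xs, ys with
  | [::], [::] => True
  | x :: xs', y :: ys' => R x y /\ F2 R xs' ys'
  | _, _ => False
  end.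

Lemma F2_size {A B : Type} (R : A -> B -> Prop) xs ys : F2 R xs ys -> size xs = size ys.
Proof. by elim: xs ys => [|x xs IH] [|y ys] //= [_ /IH ->]. Qed.

Lemma F2_cat {A B : Type} (R : A -> B -> Prop) xs1 ys1 xs2 ys2 :
  F2 R xs1 ys1 -> F2 R xs2 ys2 -> F2 R (xs1 ++ xs2) (ys1 ++ ys2).
Proof. by elim: xs1 ys1 => [|x xs IH] [|y ys] //= [h1 h2] h3; split=> //; apply: IH. Qed.

Lemma F2_nth {A B : Type} (R : A -> B -> Prop) xs ys dx r y :
  F2 R xs ys -> onth ys r = Some y -> R (nth dx xs r) y.
Proof.
elim: xs ys r => [|x xs IH] [|y' ys] r //=.
- by rewrite onth0n.
- move=> [h1 h2]; case: r => [|r] /=; first by move=> [<-].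
  by move=> h; exact: (IH ys r h2 h).
Qed.

Lemma F2_flatten {A B : Type} (R : A -> B -> Prop) (X : nat -> seq A) (Y : nat -> seq B) l :
  (forall a, a \in l -> F2 R (X a) (Y a)) ->
  F2 R (flatten (map X l)) (flatten (map Y l)).
Proof.
elim: l => [|a l IH] //= H; apply: F2_cat; first by apply: H; rewrite inE eqxx.
by apply: IH => b bl; apply: H; rewrite inE bl orbT.
Qed.

Lemma onth_filter {T : Type} (p : pred T) s i x : onth (filter p s) i = Some x -> p x.
Proof.
elim: s i => [|y s IH] i; first by rewrite onth0n.
rewrite /=; case: ifP => py; last exact: IH.
case: i => [|i] /=; first by move=> [<-].
exact: IH.
Qed.

Definition isid {S : Type} (mul : S -> S -> S) (x : S) : bool :=
  if excluded_middle_informative (is_identity mul x) then true else false.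

Lemma isidP {S : Type} (mul : S -> S -> S) x : reflect (is_identity mul x) (isid mul x).
Proof. by rewrite /isid; case: excluded_middle_informative => h; constructor. Qed.

Lemma id_uniq {S : Type} (mul : S -> S -> S) x y :
  is_identity mul x -> is_identity mul y -> x = y.
Proof. by move=> hx hy; case: (hx y) => <- _; case: (hy x). Qed.

Definition skel {S : Type} (mul : S -> S -> S) (B : seq S) := filter (predC (isid mul)) B.

Fixpoint gaps {S : Type} (mul : S -> S -> S) (B : seq S) : seq nat :=
  match B with
  | [::] => [:: 0]
  | x :: B' => if isid mul x then (head 0 (gaps mul B')).+1 :: behead (gaps mul B')
               else 0 :: gaps mul B'
  end.

Lemma gaps_cons {S : Type} (mul : S -> S -> S) B : gaps mul B = head 0 (gaps mul B) :: behead (gaps mul B).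
Proof. by case: B => [|x B] //=; case: ifP. Qed.

Lemma size_gaps {S : Type} (mul : S -> S -> S) B : size (gaps mul B) = (size (skel mul B)).+1.
Proof.
elim: B => [|x B IH] //=; rewrite /skel /=; case: ifP => /= h.
  by rewrite -IH [in RHS]gaps_cons.
by rewrite IH.
Qed.

Inductive Ins {S : Type} (mul : S -> S -> S) : seq S -> seq S -> Prop :=
| Ins_nil : Ins mul [::] [::]
| Ins_keep x B B' : Ins mul B B' -> Ins mul (x :: B) (x :: B')
| Ins_id y B B' : is_identity mul y -> Ins mul B B' -> Ins mul B (y :: B').

Lemma gaps_Ins {S : Type} (mul : S -> S -> S) B' : forall B,
  skel mul B = skel mul B' -> all2 leq (gaps mul B) (gaps mul B') -> Ins mul B B'.
Proof.
elim: B' => [|y B1' IH] B.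
  case: B => [|x B] //=; first by constructor.
  rewrite /skel /=; case: ifP => //= h _; move/negbFE: h => ->.
  by [].
case: (boolP (isid mul y)) => hy.
  case: B => [|x B1].
    move=> sk _; apply: Ins_id; first exact/isidP.
    have sk' : skel mul B1' = [::] by move: sk; rewrite /skel /= hy.
    apply: IH; first by rewrite sk'.
    move: (size_gaps mul B1'); rewrite sk' /=.
    by case: (gaps mul B1') => [|g [|g' l]].
  case: (boolP (isid mul x)) => hx.
    have -> : x = y by apply: (id_uniq (mul:=mul)); apply/isidP.
    rewrite /skel /= hy /= => sk.
    move=> /andP[h1 h2].
    apply: Ins_keep; apply: IH => //.
    by rewrite [gaps mul B1]gaps_cons [gaps mul B1']gaps_cons /= -ltnS h1 h2.
  rewrite /skel /= hy => sk le; apply: Ins_id; first exact/isidP.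
  apply: IH.
    by rewrite /skel /= hx; move: sk; rewrite hx.
  move: le; rewrite /= (negbTE hx) [gaps mul B1']gaps_cons /=.
  by [].
case: B => [|x B1]; first by rewrite /skel /= hy.
rewrite /skel /= hy /=; case: (boolP (isid mul x)) => hx //=.
  by move=> _; rewrite (negbTE hy).
rewrite (negbTE hy) /=.
case=> -> sk le; apply: Ins_keep; exact: IH.
Qed.


Lemma Ins_nil_prod {S : Type} (mul : S -> S -> S) B B' :
  Ins mul B B' -> B = [::] -> forall x, foldl mul x B' = x.
Proof.
elim=> [//|//|y B0 B0' hy _ IH] e x /=.
by case: (hy x) => _ ->; apply: IH.
Qed.

Lemma Ins_local {S : Type} (mul : S -> S -> S) B B' :
  Ins mul B B' -> B <> [::] ->
  exists Cs, F2 (fun C x => sprod_eq mul C x) Cs B /\ flatten Cs = B'.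
Proof.
elim=> [//|x B0 B0' hI IH _|y B0 B0' hy hI IH ne].
  case: B0 hI IH => [|z B0] hI IH.
    exists [:: x :: B0']; split; last by rewrite /= cats0.
    by split=> //=; apply: (Ins_nil_prod hI).
  case: IH => // Cs [h1 h2]; exists ([:: x] :: Cs); split=> //=; by rewrite h2.
case: (IH ne) => Cs [h1 h2].
case: Cs h1 h2 => [|C Cs]; first by case: B0 ne {IH hI}.
case: B0 ne {IH hI} => [//|z B0] _ /= [hC hCs] <-.
exists ((y :: C) :: Cs); split=> //; split=> //.
case: C hC => [//|w C] /=; by case: (hy w) => ->.
Qed.

Lemma foldl_skel {S : Type} (mul : S -> S -> S) ys x :
  foldl mul x ys = foldl mul x (skel mul ys).
Proof.
elim: ys x => [//|y ys IH] x /=; rewrite /skel /=.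
case: (boolP (isid mul y)) => h /=; last exact: IH.
by case: (isidP mul y h x) => _ ->; apply: IH.
Qed.

Lemma sprod_skel {S : Type} (mul : S -> S -> S) B s :
  sprod_eq mul B s -> skel mul B <> [::] -> sprod_eq mul (skel mul B) s.
Proof.
case: B => [//|y ys] /= <-; rewrite /skel /=.
case: (boolP (isid mul y)) => h /=.
  rewrite (foldl_skel mul ys y) /skel.
  case: (filter _ ys) => [//|z zs] _ /=; by case: (isidP mul y h z) => ->.
by move=> _; rewrite (foldl_skel mul ys y).
Qed.

Lemma skel_nid {S : Type} (mul : S -> S -> S) B i x :
  onth (skel mul B) i = Some x -> ~ is_identity mul x.
Proof.
move=> H hx; have /= h := onth_filter H.
by move/(isidP mul): hx; rewrite (negbTE h).
Qed.

Definition idx {T : Type} (L : seq T) (d : T) : nat :=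
  match excluded_middle_informative (exists j, onth L j = Some d) with
  | left H => proj1_sig (constructive_indefinite_description _ H)
  | right _ => size L
  end.

Lemma onth_size {T : Type} (L : seq T) j d : onth L j = Some d -> j < size L.
Proof. by elim: L j => [|x L IH] [|j] //= /IH. Qed.

Lemma idx_found {T : Type} (L : seq T) d :
  (exists j, onth L j = Some d) -> onth L (idx L d) = Some d.
Proof.
move=> H; rewrite /idx; case: excluded_middle_informative => // H'.
exact: (proj2_sig (constructive_indefinite_description _ H')).
Qed.

Lemma idx_le {T : Type} (L : seq T) d : idx L d <= size L.
Proof.
rewrite /idx; case: excluded_middle_informative => // H'.
apply: ltnW; apply: (onth_size (d := d)).
exact: (proj2_sig (constructive_indefinite_description _ H')).
Qed.

Lemma idx_inj {T : Type} (L : seq T) (d1 d2 : T) (d0 : T) :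
  idx L d1 = idx L d2 ->
  ((exists j, onth L j = Some d1) \/ d1 = d0) ->
  ((exists j, onth L j = Some d2) \/ d2 = d0) -> d1 = d2.
Proof.
move=> e o1 o2.
have nf d : ~ (exists j, onth L j = Some d) -> idx L d = size L.
  by rewrite /idx; case: excluded_middle_informative.
case: (classic (exists j, onth L j = Some d1)) => h1;
case: (classic (exists j, onth L j = Some d2)) => h2.
- by move: (idx_found h1) (idx_found h2); rewrite e => -> [].
- by have := onth_size (idx_found h1); rewrite e (nf _ h2) ltnn.
- by have := onth_size (idx_found h2); rewrite -e (nf _ h1) ltnn.
- by case: o1 => // ->; case: o2.
Qed.

Definition maxsz {T : Type} (L : seq (seq T)) : nat := foldr (fun d m => maxn (size d) m) 0 L.

Lemma maxsz_le {T : Type} (L : seq (seq T)) j d : onth L j = Some d -> size d <= maxsz L.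
Proof.
elim: L j => [|x L IH] [|j] //=; first by case=> ->; rewrite leq_maxl.
move/IH => h; exact: leq_trans h (leq_maxr _ _).
Qed.

Lemma all2_nth (s1 s2 : seq nat) : size s1 = size s2 ->
  (forall i, i < size s1 -> nth 0 s1 i <= nth 0 s2 i) -> all2 leq s1 s2.
Proof.
elim: s1 s2 => [|x s1 IH] [|y s2] //= [e] H.
rewrite (H 0 erefl) /=; apply: IH => // i hi; exact: (H i.+1).
Qed.


Definition PS {T : Type} (Cs : seq (seq T)) (k : nat) := sumn (map size (take k Cs)).

Lemma PS_le {T : Type} (Cs : seq (seq T)) k : PS Cs k <= size (flatten Cs).
Proof.
rewrite /PS size_flatten /shape -{2}(cat_take_drop k Cs) map_cat sumn_cat.
exact: leq_addr.
Qed.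

Lemma PS_step {T : Type} (Cs : seq (seq T)) r : r < size Cs ->
  PS Cs r.+1 = PS Cs r + size (nth [::] Cs r).
Proof. by move=> h; rewrite /PS (take_nth [::] h) map_rcons sumn_rcons. Qed.

Lemma PS_size {T : Type} (Cs : seq (seq T)) k : PS Cs k = size (flatten (take k Cs)).
Proof. by rewrite /PS size_flatten. Qed.

Definition mkphi {S : Type} (s t : seq S) (Cs : seq (seq S)) :
  {ffun 'I_(size s).+1 -> 'I_(size t).+1} :=
  [ffun i : 'I_(size s).+1 => inord (PS Cs i)].

Lemma mkphi_val {S : Type} (s t : seq S) Cs : flatten Cs = t ->
  forall i : 'I_(size s).+1, nat_of_ord (mkphi s t Cs i) = PS Cs i.
Proof.
move=> ft i; rewrite ffunE inordK // ltnS -ft; exact: PS_le.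
Qed.

Lemma phin_mkphi {S : Type} (s t : seq S) Cs : flatten Cs = t ->
  forall k, k <= size s -> phin (mkphi s t Cs) k = PS Cs k.
Proof.
move=> ft k hk; rewrite /phin mkphi_val // inordK //.
Qed.

Lemma mkphi_mor {S : Type} (mul : S -> S -> S) (s t : seq S) Cs :
  F2 (fun C x => sprod_eq mul C x) Cs s -> flatten Cs = t ->
  is_mor mul s t (mkphi s t Cs).
Proof.
move=> hF ft; have sz := F2_size hF.
have ne r : r < size Cs -> 0 < size (nth [::] Cs r).
  move=> hr; rewrite sz in hr.
  case e: (onth s r) => [x|]; last by have := onthTE s r; rewrite e hr.
  by have := F2_nth [::] hF e; case: (nth [::] Cs r).
have mono i j : i < j -> j <= size Cs -> PS Cs i < PS Cs j.
  move=> ij; elim: j ij => [//|j IH].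
  move=> ij hj; rewrite (PS_step hj); have := ne _ hj.
  move: ij; rewrite ltnS leq_eqVlt => /orP[/eqP->|ij]; first by lia.
  have := IH ij (ltnW hj); lia.
split.
- move=> i j ij; rewrite !mkphi_val //; apply: mono => //.
  by rewrite sz -ltnS.
- by rewrite phin_mkphi // /PS take0.
- by rewrite phin_mkphi // /PS take_oversize ?sz // -size_flatten ft.
- move=> i x hx; have hi := onth_size hx; rewrite !phin_mkphi //.
  have hi' : i < size Cs by rewrite sz.
  have eCs : Cs = take i Cs ++ nth [::] Cs i :: drop i.+1 Cs.
    by rewrite -drop_nth // cat_take_drop.
  rewrite -ft; have -> : flatten Cs = flatten (take i Cs) ++ nth [::] Cs i ++ flatten (drop i.+1 Cs).
    by rewrite {1}eCs flatten_cat.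
  rewrite (PS_step hi') PS_size take_cat ltnNge leq_addr /= addKn.
  rewrite take_cat ltnn subnn take0 cats0 drop_size_cat //.
    exact: (F2_nth [::] hF hx).
  exact: ltnW.
Qed.

Lemma phin_le {S : Type} (s t : seq S) (phi : {ffun 'I_(size s).+1 -> 'I_(size t).+1}) b :
  phin phi b <= size t.
Proof. by rewrite /phin -ltnS. Qed.

Lemma phin_mono {S : Type} (mul : S -> S -> S) (s t : seq S) phi :
  is_mor mul s t phi -> forall b, b < size s -> phin phi b < phin phi b.+1.
Proof.
case=> m _ _ _ b hb; rewrite /phin; apply: m.
rewrite !inordK //; exact: ltnW.
Qed.

Definition blk {S : Type} (s t : seq S) (phi : {ffun 'I_(size s).+1 -> 'I_(size t).+1}) b :=
  drop (phin phi b) (take (phin phi b.+1) t).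

Lemma blocks_flat {S : Type} (mul : S -> S -> S) (s t : seq S) phi :
  is_mor mul s t phi -> forall a, a <= size s ->
  flatten [seq blk phi b | b <- iota 0 a] = take (phin phi a) t.
Proof.
move=> hm; have [_ h0 _ _] := hm; elim=> [|a IH] ha; first by rewrite h0 take0.
rewrite -addn1 iotaD map_cat flatten_cat IH ?(ltnW ha) //= cats0 add0n addn1.
rewrite /blk -{1}(take_takel _ (ltnW (phin_mono hm ha))).
by rewrite cat_take_drop.
Qed.


Fixpoint lexle (s t : seq nat) : bool :=
  match s, t with
  | [::], _ => true
  | _ :: _, [::] => false
  | x :: s', y :: t' => (x < y) || ((x == y) && lexle s' t')
  end.

Lemma lex_refl s : lexle s s.
Proof. by elim: s => //= x s ->; rewrite eqxx orbT. Qed.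

Lemma lex_anti s t : lexle s t -> lexle t s -> s = t.
Proof.
elim: s t => [|x s IH] [|y t] //= /orP[h|/andP[/eqP e h]] /orP[h'|/andP[/eqP e' h']].
- by move: (ltn_trans h h'); rewrite ltnn.
- by move: h; rewrite e' ltnn.
- by move: h'; rewrite e ltnn.
- by rewrite e (IH t).
Qed.

Lemma lex_trans s t u : lexle s t -> lexle t u -> lexle s u.
Proof.
elim: s t u => [|x s IH] [|y t] [|z u] //= /orP[h|/andP[/eqP e h]] /orP[h'|/andP[/eqP e' h']].
- by rewrite (ltn_trans h h').
- by rewrite -e' h.
- by rewrite e h'.
- by rewrite e e' eqxx (IH t u) ?orbT.
Qed.

Lemma lex_total s t : lexle s t || lexle t s.
Proof.
elim: s t => [|x s IH] [|y t] //=.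
case: (ltngtP x y) => //= e; rewrite e eqxx /=; exact: IH.
Qed.

Lemma lex_map (G : nat -> nat) m s t :
  (forall x y, x <= m -> y <= m -> x < y -> G x < G y) ->
  all (fun v => v <= m) s -> all (fun v => v <= m) t ->
  lexle (map G s) (map G t) = lexle s t.
Proof.
move=> Gm; elim: s t => [|x s IH] [|y t] //= /andP[hx hs] /andP[hy ht].
rewrite IH //.
case: (ltngtP x y) => e.
- by rewrite (Gm _ _ hx hy e).
- have := Gm _ _ hy hx e; case: ltngtP => //=; by rewrite orbF.
- by rewrite e ltnn eqxx.
Qed.

Lemma list_min (T : eqType) (r : rel T) :
  (forall x y, r x y || r y x) -> (forall x y z, r x y -> r y z -> r x z) ->
  forall (l : seq T) x, x \in l -> exists m, m \in l /\ forall y, y \in l -> r m y.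
Proof.
move=> tot tr; elim=> [//|a l IH] x _.
case: (boolP (has predT l)) => hl.
  case/hasP: hl => x0 hx0 _; case: (IH x0 hx0) => m [ml mmin].
  case/orP: (tot a m) => h.
    exists a; split; first by rewrite inE eqxx.
    move=> y; rewrite inE => /orP[/eqP->|yl]; first by case/orP: (tot a a).
    exact: tr h (mmin y yl).
  exists m; split; first by rewrite inE ml orbT.
  by move=> y; rewrite inE => /orP[/eqP->|yl] //; apply: mmin.
exists a; split; first by rewrite inE eqxx.
move=> y; rewrite inE => /orP[/eqP->|yl]; first by case/orP: (tot a a).
by move: hl; rewrite has_predT; case: l {IH} yl.
Qed.

Definition Fkey n m (phi : {ffun 'I_n.+1 -> 'I_m.+1}) : seq nat :=
  [seq nat_of_ord (phi i) | i <- enum 'I_n.+1].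

Lemma Fkey_inj n m (phi1 phi2 : {ffun 'I_n.+1 -> 'I_m.+1}) : Fkey phi1 = Fkey phi2 -> phi1 = phi2.
Proof.
move=> /eq_in_map h; apply/ffunP => i; apply: val_inj => /=; apply: h.
by rewrite mem_enum.
Qed.

Lemma Fkey_bound n m (phi : {ffun 'I_n.+1 -> 'I_m.+1}) : all (fun v => v <= m) (Fkey phi).
Proof. by apply/allP => v /mapP[i _ ->]; rewrite -ltnS. Qed.

Lemma Hom_eq {S : Type} (mul : S -> S -> S) s t (f f' : Hom mul s t) :
  proj1_sig f = proj1_sig f' -> f = f'.
Proof.
case: f f' => [phi H] [phi' H'] /= e; subst phi'.
by rewrite (proof_irrelevance _ H H').
Qed.

Definition pb (P : Prop) : bool := if excluded_middle_informative P then true else false.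
Lemma pbP (P : Prop) : reflect P (pb P).
Proof. by rewrite /pb; case: excluded_middle_informative => h; constructor. Qed.

Definition Rord {S : Type} (mul : S -> S -> S) (c c' : seq S) (f f' : Hom mul c c') : Prop :=
  lexle (Fkey (proj1_sig f)) (Fkey (proj1_sig f')).

Lemma admissible {S : Type} (mul : S -> S -> S) (c : seq S) :
  admissible_order mul c (fun c' => @Rord S mul c c').
Proof.
split.
  move=> c' _; split.
  - move=> x; exact: lex_refl.
  - move=> x y h1 h2; apply: Hom_eq; apply: Fkey_inj; exact: lex_anti.
  - move=> x y z; exact: lex_trans.
  - move=> x y; case/orP: (lex_total (Fkey (proj1_sig x)) (Fkey (proj1_sig y))); by [left|right].
  move=> P [x Px].
  pose Q (phi : {ffun 'I_(size c).+1 -> 'I_(size c').+1}) := pb (exists H, P (exist _ phi H)).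
  pose l := [seq phi <- enum {ffun 'I_(size c).+1 -> 'I_(size c').+1} | Q phi].
  have xl : proj1_sig x \in l.
    rewrite mem_filter mem_enum andbT; apply/pbP.
    by case: x Px => phi H Px; exists H.
  have [m [ml mmin]] := list_min (r := fun a b => lexle (Fkey a) (Fkey b))
    (fun a b => lex_total _ _) (fun a b d => @lex_trans _ _ _) xl.
  move: ml; rewrite mem_filter => /andP[/pbP [H Pm] _].
  exists (exist _ m H); split=> // y Py; apply: mmin.
  rewrite mem_filter mem_enum andbT; apply/pbP.
  by case: y Py => phi H' Py; exists H'.
move=> c' c'' g f f' h h' _ _ eh eh' [Rff' nff'].
pose G v := if v <= size c' then nat_of_ord (proj1_sig g (inord v)) else (size c'').+1 + v.
have Gm : forall x y, x <= size c' -> y <= size c' -> x < y -> G x < G y.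
  move=> x y hx hy xy; rewrite /G hx hy.
  case: (proj2_sig g) => mono _ _ _; apply: mono; rewrite !inordK //.
have Fk (k : Hom mul c c'') (k0 : Hom mul c c') : comp_is g k0 k ->
    Fkey (proj1_sig k) = map G (Fkey (proj1_sig k0)).
  rewrite /comp_is => ->; rewrite /Fkey -map_comp; apply: eq_map => i /=.
  rewrite ffunE /G -ltnS ltn_ord inord_val //.
rewrite /Rord (Fk _ _ eh) (Fk _ _ eh') (lex_map Gm) ?Fkey_bound //; split=> // ehh.
apply: nff'; apply: Hom_eq; apply: Fkey_inj.
have e : map G (Fkey (proj1_sig f)) = map G (Fkey (proj1_sig f')) by rewrite -(Fk _ _ eh) -(Fk _ _ eh') ehh.
apply: lex_anti.
  by rewrite -(lex_map Gm) ?Fkey_bound // e lex_refl.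
by rewrite -(lex_map Gm) ?Fkey_bound // e lex_refl.
Qed.


Lemma onth_nthS {T : Type} (s : seq T) x0 a : a < size s -> onth s a = Some (nth x0 s a).
Proof. by elim: s a => [|x s IH] [|a] //= /IH. Qed.

Lemma flatten_map_flatten {T : Type} (X : nat -> seq (seq T)) l :
  flatten (flatten (map X l)) = flatten (map (fun a => flatten (X a)) l).
Proof. by elim: l => //= a l IH; rewrite flatten_cat IH. Qed.

Lemma noeth {S : Type} (mul : S -> S -> S) (hfin : finite_decompositions mul) (c : seq S) :
  0 < size c -> noetherian_under mul c.
Proof.
case: c => [//|x0 c0] _; set c := x0 :: c0.
move=> t f ht.
set n := size c.
pose Lf (s : S) := proj1_sig (constructive_indefinite_description _ (hfin s)).
have LfP s : forall d, sprod_eq mul d s ->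
    (forall i x, onth d i = Some x -> ~ is_identity mul x) -> exists j, onth (Lf s) j = Some d.
  exact: (proj2_sig (constructive_indefinite_description _ (hfin s))).
pose phi k := proj1_sig (f k).
have phiM k : is_mor mul c (t k) (phi k) := proj2_sig (f k).
pose B k a := blk (phi k) a.
have Bprod k a : a < n -> sprod_eq mul (B k a) (nth x0 c a).
  move=> ha; case: (phiM k) => _ _ _ h4; apply: h4; exact: onth_nthS.
pose L a := Lf (nth x0 c a).
have found k a : a < n ->
    (exists j, onth (L a) j = Some (skel mul (B k a))) \/ skel mul (B k a) = [::].
  move=> ha; case e: (skel mul (B k a)) => [|y ys]; [by right | left].
  rewrite -e; apply: LfP; first by apply: sprod_skel; [exact: Bprod | rewrite e].
  exact: skel_nid.
pose W a := (maxsz (L a)).+1.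
pose jj k a := idx (L a) (skel mul (B k a)).
pose V k a := nth 0 [:: jj k a, size (L a) - jj k a, size (gaps mul (B k a)),
                      W a - size (gaps mul (B k a)) & gaps mul (B k a)].
have ch := @chain_vec (nat -> nat) (fun a u v => forall i, i < (W a).+4 -> u i <= v i)
  (fun a => @chain_vec nat (fun _ x y => x <= y) (fun _ => nat_chain)
              (fun _ x y z => @leq_trans y x z) (W a).+4)
  (fun a x y z h1 h2 i hi => leq_trans (h1 i hi) (h2 i hi)) n V.
case: ch => g [gi gc].
exists (g 0), (g 1); split; first exact: gi.
have Ins_a a : a < n -> Ins mul (B (g 0) a) (B (g 1) a).
  move=> ha; have H := gc 0 a ha.
  have h0 := H 0 erefl; have h1 := H 1 erefl; have h2 := H 2 erefl; have h3 := H 3 erefl.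
  rewrite /V /= in h0 h1 h2 h3.
  have le1 : jj (g 0) a <= size (L a) := idx_le _ _.
  have le2 : jj (g 1) a <= size (L a) := idx_le _ _.
  have ej : jj (g 0) a = jj (g 1) a by lia.
  have sk : skel mul (B (g 0) a) = skel mul (B (g 1) a).
    exact: idx_inj ej (found _ _ ha) (found _ _ ha).
  have szb k : size (gaps mul (B k a)) <= W a.
    rewrite size_gaps /W ltnS; case: (found k a ha) => [[j hj]|->] //.
    exact: maxsz_le hj.
  have es : size (gaps mul (B (g 0) a)) = size (gaps mul (B (g 1) a)).
    have := szb (g 0); have := szb (g 1); lia.
  apply: gaps_Ins => //; apply: all2_nth => // i hi.
  have := H i.+4; rewrite /V /=; apply.
  have := szb (g 0); lia.
have Cex a : exists Cs, a < n ->
    F2 (fun C x => sprod_eq mul C x) Cs (B (g 0) a) /\ flatten Cs = B (g 1) a.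
  case: (ltnP a n) => ha; last by exists [::].
  have ne : B (g 0) a <> [::] by move=> e; move: (Bprod (g 0) a ha); rewrite e.
  have [Cs HC] := Ins_local (Ins_a a ha) ne.
  by exists Cs.
pose Cf a := proj1_sig (constructive_indefinite_description _ (Cex a)).
have CfP a : a < n -> F2 (fun C x => sprod_eq mul C x) (Cf a) (B (g 0) a) /\ flatten (Cf a) = B (g 1) a.
  exact: (proj2_sig (constructive_indefinite_description _ (Cex a))).
pose Csg := flatten [seq Cf a | a <- iota 0 n].
have tfl k : flatten [seq B k a | a <- iota 0 n] = t k.
  have := blocks_flat (phiM k) (leqnn n); rewrite /B => ->.
  by case: (phiM k) => _ _ -> _; rewrite take_size.
have F2l m : m <= n -> F2 (fun C x => sprod_eq mul C x) (flatten [seq Cf a | a <- iota 0 m])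
     (flatten [seq B (g 0) a | a <- iota 0 m]).
  move=> hm; apply: F2_flatten => a; rewrite mem_iota => /andP[_ ha].
  exact: (CfP a (leq_trans ha hm)).1.
have F2g : F2 (fun C x => sprod_eq mul C x) Csg (t (g 0)) by rewrite -tfl; exact: F2l.
have fll m : m <= n -> flatten (flatten [seq Cf a | a <- iota 0 m]) = flatten [seq B (g 1) a | a <- iota 0 m].
  move=> hm; rewrite flatten_map_flatten; congr flatten; apply/eq_in_map => a.
  rewrite mem_iota => /andP[_ ha]; exact: (CfP a (leq_trans ha hm)).2.
have flg : flatten Csg = t (g 1) by rewrite /Csg fll // tfl.
exists (exist _ (mkphi (t (g 0)) (t (g 1)) Csg) (mkphi_mor F2g flg)).
rewrite /comp_is /=; apply/ffunP => a; rewrite ffunE; apply: val_inj => /=.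
rewrite mkphi_val //.
have ha : (a : nat) <= n by rewrite -ltnS.
have e k : nat_of_ord (phi k a) = size (flatten [seq B k b | b <- iota 0 a]).
  have := blocks_flat (phiM k) ha; rewrite /B => ->.
  by rewrite size_takel ?phin_le // /phin inord_val.
rewrite -/(phi (g 1)) -/(phi (g 0)) !e.
have -> : Csg = flatten [seq Cf b | b <- iota 0 a] ++ flatten [seq Cf b | b <- iota a (n - a)].
  by rewrite /Csg -flatten_cat -map_cat -{2}(add0n a) -iotaD subnKC.
rewrite PS_size take_size_cat; first by rewrite fll.
exact: F2_size (F2l a ha).
Qed.


Theorem proposition5p12 (S : Type) (mul : S -> S -> S)
    (mulA : associative mul) (hfin : finite_decompositions mul) :
  groebner_OIep_NS mul.
Proof.
move=> c hc; split.
  by exists (fun c' => @Rord S mul c c'); exact: admissible.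
exact: noeth hfin c hc.
Qed.
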